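(* Let $H$ be a finite group of odd order such that $d(\mathbb{Z}_2\times H)=2$. Then $\mathsf{GEN}(\mathbb{Z}_2\times H)=*0$.
   Context: For a finite group $G$, $\mathsf{GEN}(G)$ is the following impartial two-player game. A position is a set of elements selected so far; the starting position is $\emptyset$. From a position $P$ with $\langle P\rangle\neq G$, the player to move selects some $g\in G\setminus P$, producing the position $P\cup\{g\}$ (these are the options of $P$); a position $P$ with $\langle P\rangle = G$ has no options. The nim-number of a position is defined recursively by $\operatorname{nim}(P)=\operatorname{mex}\{\operatorname{nim}(Q): Q \text{ an option of } P\}$, where $\operatorname{mex}(A)$ is the least nonnegative integer not in $A$. We write $\mathsf{GEN}(G)=*n$ if $\operatorname{nim}(\emptyset)=n$. $d(G)$ denotes the minimum size of a generating set of $G$; $\mathbb{Z}_2$ is the cyclic group of order $2$. *)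

(* Defs.v *)
From mathcomp Require Import all_boot all_fingroup all_algebra.
Set Implicit Arguments. Unset Strict Implicit. Unset Printing Implicit Defensive.
Local Open Scope group_scope.

Definition mex (s : seq nat) : nat := find (fun k => k \notin s) (iota 0 (size s).+1).

Section Gen.
Variable gT : finGroupType.
Variable G : {set gT}.

(* d(G): minimum size of a generating set of G (G itself generates G) *)
Definition dgen : nat :=
  \big[minn/#|G|]_(A : {set gT} | (A \subset G) && (<<A>> == G)) #|A|.

Fixpoint nim_fuel (n : nat) (P : {set gT}) : nat :=
  match n with
  | 0 => 0
  | n'.+1 => if <<P>> == G then 0
             else mex [seq nim_fuel n' (g |: P) | g <- enum (G :\: P)]
  end.

(* enough fuel: every play from P (a subset of G) lasts at most #|G| - #|P| moves *)
Definition nim (P : {set gT}) : nat := nim_fuel (#|G| - #|P|).+1 P.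

(* GEN(G) = *n  iff  nim_GEN G = n *)
Definition nim_GEN : nat := nim set0.
End Gen.

(* Main.v *)
Require Import Defs.
From mathcomp Require Import all_boot all_fingroup all_algebra.
From mathcomp Require Import all_solvable zify.
Local Open Scope group_scope.

Definition a0 : 'Z_2 := Zp1.
Lemma a0n1 : a0 != 1. Proof. by []. Qed.
Lemma z2_all (a : 'Z_2) : a = 1 \/ a = a0.
Proof. case: a => [[|[|m]] Hm]; [left|right|by []]; exact/val_inj. Qed.
Lemma z2_sq (a : 'Z_2) : a * a = 1.
Proof. by case: (z2_all a) => ->; apply/val_inj. Qed.
Lemma inZp2 (a : 'Z_2) : a \in Zp 2.
Proof. by rewrite /Zp /= inE. Qed.
Lemma z2_exp (a : 'Z_2) n : a ^+ n = if odd n then a else 1.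
Proof.
elim: n => [|n IH]; first by rewrite expg0.
rewrite expgS IH /=; case: (odd n) => /=; first by rewrite z2_sq.
by rewrite mulg1.
Qed.

Lemma mex_eq0 (s : seq nat) : (mex s == 0%N) = (0%N \notin s).
Proof. by rewrite /mex /=; case: ifP. Qed.

Lemma bigmin_le (I : eqType) (r : seq I) (P : pred I) (F : I -> nat) x0 i :
  i \in r -> P i -> \big[minn/x0]_(j <- r | P j) F j <= F i.
Proof.
elim: r => //= j r IH; rewrite inE big_cons => /orP[/eqP<- Pi | ir Pi].
  by rewrite Pi geq_minl.
case: ifP => _; last exact: IH.
exact: leq_trans (geq_minr _ _) (IH ir Pi).
Qed.

Section Main.
Variables (hT : finGroupType) (H : {group hT}).
Hypothesis oddH : odd #|H|.

Local Notation G := (setX (Zp 2) H).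
Local Notation gT := ('Z_2 * hT)%type.

Definition t : gT := (a0, 1).
Definition S (P : {set gT}) := [set x.2 | x in P].
Definition safe (P : {set gT}) := forall k, k \in H -> <<k |: S P>> != H.
Definition tcl (P : {set gT}) := forall x, x \in P -> x * t \in P.

Lemma memG (x : gT) : (x \in G) = (x.2 \in H).
Proof. by case: x => a h; rewrite in_setX inZp2. Qed.

Lemma tG : t \in G. Proof. by rewrite memG /= group1. Qed.
Lemma tt1 : t * t = 1. Proof. by rewrite /t; congr (_, _); [apply: z2_sq | apply: mulg1]. Qed.

Lemma SsubH (P : {set gT}) : P \subset G -> S P \subset H.
Proof.
move=> sPG; apply/subsetP => h /imsetP[x xP ->].
by rewrite -memG (subsetP sPG).
Qed.

Lemma gen_full (P : {set gT}) : P \subset G -> <<P>> = G -> H \subset <<S P>>.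
Proof.
move=> sPG genP; apply/subsetP => h hH.
have : ((1 : 'Z_2), h) \in <<P>> by rewrite genP memG.
have sub : <<P>> \subset setX [set: 'Z_2] <<S P>>.
  rewrite gen_subG; apply/subsetP => x xP; rewrite inE /= inE /=.
  by apply: mem_gen; apply/imsetP; exists x.
by move/(subsetP sub); rewrite inE => /andP[_].
Qed.

Lemma expg_pair (x : gT) n : x ^+ n = (x.1 ^+ n, x.2 ^+ n).
Proof.
elim: n => [|n IH]; first by rewrite !expg0.
by rewrite !expgS IH.
Qed.

Lemma F2 (R : {set gT}) (z : gT) : R \subset G -> z \in R -> z.1 != 1 -> H \subset <<S R>> -> <<R>> = G.
Proof.
move=> sRG zR z1 HS.
have zG := subsetP sRG z zR.
have ez : z.1 = a0 by case: (z2_all z.1) => // e; rewrite e eqxx in z1.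
set K := <<R>>.
have tK : t \in K.
  have -> : t = z ^+ #[z.2].
    rewrite expg_pair expg_order z2_exp ez.
    have -> : odd #[z.2] by apply: dvdn_odd oddH; apply: order_dvdG; rewrite -memG.
    by [].
  by rewrite groupX // mem_gen.
have LK : H \subset (@pair1g 'Z_2 hT) @*^-1 K.
  apply: subset_trans HS _; rewrite gen_subG; apply/subsetP => h /imsetP[[b h'] xR ->] /=.
  apply: mem_morphpre; first by rewrite inE.
  change (((1 : 'Z_2), h') \in K); case: (z2_all b) => eb; subst b.
    exact: mem_gen.
  have -> : ((1 : 'Z_2), h') = (a0, h') * t by congr (_, _); [rewrite /= z2_sq | rewrite /= mulg1].
  by rewrite groupM // mem_gen.
apply/eqP; rewrite eqEsubset gen_subG sRG /=.
apply/subsetP => [[b h]]; rewrite memG /= => hH.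
have := subsetP LK h hH; rewrite inE => /andP[_]; rewrite inE => Kh.
case: (z2_all b) => eb; subst b; first by [].
have -> : (a0, h) = t * ((1 : 'Z_2), h) by congr (_, _); rewrite /= ?mulg1 ?mul1g.
by rewrite groupM.
Qed.

Lemma nim_term (P : {set gT}) : <<P>> = G -> nim G P = 0%N.
Proof. by move=> e; rewrite /nim /= e eqxx. Qed.

Lemma nim_step (P : {set gT}) : P \subset G -> <<P>> != G ->
  nim G P = mex [seq nim G (g |: P) | g <- enum (G :\: P)].
Proof.
move=> sPG nt; rewrite /nim /= (negbTE nt); congr mex.
apply/eq_in_map => g; rewrite mem_enum inE => /andP[gP gG].
have cQ : #|g |: P| = #|P|.+1 by rewrite cardsU1 gP.
have : #|g |: P| <= #|G| by apply: subset_leq_card; rewrite subUset sub1set gG.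
rewrite /nim cQ => le.
by have -> : (#|G| - #|P| = (#|G| - #|P|.+1).+1)%N by lia.
Qed.

Lemma safe_nt (P : {set gT}) : P \subset G -> safe P -> <<P>> != G.
Proof.
move=> sPG sP; apply/negP => /eqP e.
have := sP 1 (group1 _); apply/negP; rewrite negbK eqEsubset.
rewrite gen_subG subUset sub1set group1 SsubH //=.
apply: (subset_trans (gen_full _ sPG e)); apply: genS; exact: subsetUr.
Qed.

Lemma main n (P : {set gT}) : (#|G| - #|P| < n)%N -> P \subset G -> tcl P -> safe P -> nim G P = 0%N.
Proof.
elim: n P => // n IH P lt sPG tP sP.
rewrite nim_step //; last exact: safe_nt.
apply/eqP; rewrite mex_eq0; apply/mapP => [[g]]; rewrite mem_enum inE => /andP[gP gG].
set Q := g |: P => eq0.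
have sQG : Q \subset G by rewrite subUset sub1set gG.
have SQ : S Q = g.2 |: S P by rewrite /S imsetU1.
have g2H : g.2 \in H by rewrite -memG.
have ntQ : <<Q>> != G.
  apply/negP => /eqP e; have := sP _ g2H; apply/negP; rewrite negbK eqEsubset.
  rewrite -SQ gen_full // andbT gen_subG SsubH //.
have : nim G Q != 0%N; last by rewrite -eq0.
rewrite nim_step // mex_eq0 negbK.
have cardQ : #|Q| = #|P|.+1 by rewrite cardsU1 gP.
have [safeQ | unsafeQ] := boolP [forall k in H, <<k |: S Q>> != H].
- set h := g * t.
  have hG : h \in G by rewrite groupM // tG.
  have hg : h != g.
    apply/eqP => /(congr1 fst) /=; rewrite -{2}[g.1]mulg1 => /mulgI /eqP.
    by rewrite (negbTE a0n1).
  have hP : h \notin P.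
    by apply/negP => /tP; rewrite /h -mulgA tt1 mulg1 (negbTE gP).
  have hQ : h \notin Q by rewrite !inE negb_or hg hP.
  apply/mapP; exists h; first by rewrite mem_enum inE hQ hG.
  apply/esym/IH.
  + have : #|h |: Q| <= #|G| by apply: subset_leq_card; rewrite subUset sub1set hG.
    rewrite cardsU1 hQ cardQ; lia.
  + by rewrite subUset sub1set hG.
  + move=> x; rewrite !inE => /or3P[/eqP-> | /eqP-> | xP].
    * by rewrite /h -mulgA tt1 mulg1 eqxx orbT.
    * by rewrite eqxx.
    * by rewrite tP ?orbT.
  + move=> k kH; have := forall_inP safeQ k kH; apply: contra => /eqP e.
    rewrite eqEsubset gen_subG subUset sub1set kH (SsubH _ sQG) /=.
    apply: (@subset_trans _ _ <<k |: S (h |: Q)>>); first by rewrite e.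
    apply: genS; apply: setUS.
    apply/subsetP => y /imsetP[x]; rewrite !inE => /orP[/eqP-> | xQ] ->.
      by rewrite /h /= mulg1; apply/imsetP; exists g; rewrite // !inE eqxx.
    by apply/imsetP; exists x; rewrite // !inE.
- have [k kH] := forall_inPn unsafeQ; rewrite negbK => /eqP ek.
  set h : gT := (a0, k).
  have hG : h \in G by rewrite memG.
  set R := h |: Q.
  have sRG : R \subset G by rewrite subUset sub1set hG.
  have gR : <<R>> = G.
    apply: (F2 _ _ sRG (setU11 _ _) a0n1).
    by rewrite /R /S imsetU1 -/(S Q) ek.
  have hQ : h \notin Q.
    apply/negP => hQ; move: ntQ; rewrite -gR /R.
    by rewrite (setUidPr _) ?eqxx // sub1set.
  apply/mapP; exists h; first by rewrite mem_enum inE hQ hG.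
  by rewrite nim_term.
Qed.

End Main.

Theorem proposition4p9 (hT : finGroupType) (H : {group hT}) :
  odd #|H| -> dgen (setX (Zp 2) H) = 2 -> nim_GEN (setX (Zp 2) H) = 0.
Proof.
move=> oddH d2; rewrite /nim_GEN.
apply: (@main _ _ oddH (#|setX (Zp 2) H| - #|@set0 ('Z_2 * hT)%type|).+1) => //.
- exact: sub0set.
- by move=> x; rewrite inE.
- move=> k kH; apply/negP => /eqP e.
  have sRG : [set ((a0 : 'Z_2), k)] \subset setX (Zp 2) H by rewrite sub1set memG.
  have gR := @F2 _ _ oddH _ _ sRG (set11 _) a0n1.
  have : <<[set ((a0 : 'Z_2), k)]>> = setX (Zp 2) H.
    apply: gR; by rewrite /S imset_set1 -e /S imset0 setU0.
  move=> gR'.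
  have : dgen (setX (Zp 2) H) <= #|[set ((a0 : 'Z_2), k)]|.
    apply: bigmin_le; first exact: mem_index_enum.
    by rewrite sRG gR' eqxx.
  by rewrite d2 cards1.
Qed.
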